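(* Let $A\in\mathbb Z^{d\times n}$ with $\ker(A)\cap\mathbb N^n=\{0\}$. Then the universal distance-reducing Markov basis $\mathcal D(A)$ and the universal strongly distance-reducing Markov basis $\mathcal D^s(A)$ are finite sets.
   Context: For $z\in\mathbb Z^n$, $z^\pm\in\mathbb N^n$ are the unique vectors with disjoint supports and $z=z^+-z^-$; $\|\cdot\|$ is the $1$-norm. For nonzero $z\in\ker(A)$: $u\in\ker(A)$ reduces $z$ from $z^+$ if some $\varepsilon\in\{\pm1\}$ has $z^++\varepsilon u\in\mathbb N^n$ and $\|z^++\varepsilon u-z^-\|<\|z\|$; from $z^-$ if some $\varepsilon$ has $z^-+\varepsilon u\in\mathbb N^n$ and $\|z^+-(z^-+\varepsilon u)\|<\|z\|$. $B\subseteq\ker(A)$ is distance reducing if every nonzero $z\in\ker(A)$ is reduced from $z^+$ or from $z^-$ by some element of $B$; strongly distance reducing if every nonzero $z$ is reduced from $z^+$ by some element of $B$ and from $z^-$ by some (possibly different) element of $B$. A minimal (strongly) distance reducing Markov basis is a (strongly) distance reducing set no proper subset of which is (strongly) distance reducing. $\mathcal D(A)$ (resp. $\mathcal D^s(A)$) is the union of all minimal distance reducing (resp. minimal strongly distance reducing) Markov bases. *)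

(* Defs.v *)
From mathcomp Require Import all_boot all_order all_algebra.
Set Implicit Arguments. Unset Strict Implicit. Unset Printing Implicit Defensive.
Import Order.TTheory GRing.Theory Num.Theory.
Local Open Scope ring_scope.

Section MarkovDefs.
Variables (d n : nat) (A : 'M[int]_(d, n)).

Definition in_ker (z : 'cV[int]_n) : Prop := A *m z = 0.

Definition nonneg (z : 'cV[int]_n) : Prop := forall i, 0 <= z i 0.

Definition posp (z : 'cV[int]_n) : 'cV[int]_n := \col_i Num.max (z i 0) 0.
Definition negp (z : 'cV[int]_n) : 'cV[int]_n := \col_i Num.max (- z i 0) 0.

Definition norm1 (z : 'cV[int]_n) : int := \sum_i `|z i 0|.

(* sign eps in {1,-1} encoded by a boolean *)
Definition sgnv (eps : bool) (u : 'cV[int]_n) : 'cV[int]_n := if eps then u else - u.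

Definition reduces_plus (z u : 'cV[int]_n) : Prop :=
  exists eps : bool, nonneg (posp z + sgnv eps u) /\
    norm1 (posp z + sgnv eps u - negp z) < norm1 z.

Definition reduces_minus (z u : 'cV[int]_n) : Prop :=
  exists eps : bool, nonneg (negp z + sgnv eps u) /\
    norm1 (posp z - (negp z + sgnv eps u)) < norm1 z.

Definition distance_reducing (B : 'cV[int]_n -> Prop) : Prop :=
  (forall u, B u -> in_ker u) /\
  forall z, in_ker z -> z <> 0 ->
    (exists2 u, B u & reduces_plus z u) \/ (exists2 u, B u & reduces_minus z u).

Definition strongly_distance_reducing (B : 'cV[int]_n -> Prop) : Prop :=
  (forall u, B u -> in_ker u) /\
  forall z, in_ker z -> z <> 0 ->
    (exists2 u, B u & reduces_plus z u) /\ (exists2 u, B u & reduces_minus z u).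

Definition proper_subset (B' B : 'cV[int]_n -> Prop) : Prop :=
  (forall u, B' u -> B u) /\ exists u, B u /\ ~ B' u.

Definition minimal_wrt (P : ('cV[int]_n -> Prop) -> Prop) (B : 'cV[int]_n -> Prop) : Prop :=
  P B /\ forall B', proper_subset B' B -> ~ P B'.

Definition univ_DR (u : 'cV[int]_n) : Prop :=
  exists2 B, minimal_wrt distance_reducing B & B u.

Definition univ_SDR (u : 'cV[int]_n) : Prop :=
  exists2 B, minimal_wrt strongly_distance_reducing B & B u.

End MarkovDefs.

Definition finite_set (n : nat) (S : 'cV[int]_n -> Prop) : Prop :=
  exists s : seq 'cV[int]_n, forall u, S u -> u \in s.

(* Main.v *)
Require Import Defs.
From mathcomp Require Import all_boot all_order all_algebra.
From mathcomp Require Import zify.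
From Stdlib Require Import Classical ClassicalEpsilon.
Set Implicit Arguments. Unset Strict Implicit. Unset Printing Implicit Defensive.
Import Order.TTheory GRing.Theory Num.Theory.
Lemma dickson_aux (I : finType) (X : Type) (f : X -> I -> nat) (g : X -> nat) k :
  forall (J : {set I}) (S : X -> Prop), (#|J| <= k)%N ->
  (forall x y, S x -> S y -> forall i, i \notin J -> f x i = f y i) ->
  exists M, forall x, S x -> exists y, [/\ S y, (forall i, f y i <= f x i)%N & (g y <= M)%N].
Proof.
elim: k => [|k IH] J S HJ Hag.
  have J0 : J = set0 by apply/eqP; rewrite -cards_eq0 -leqn0.
  case: (classic (exists s0, S s0)) => [[s0 Hs0]|Hn]; last first.
    by exists 0%N => x Sx; case: Hn; exists x.
  exists (g s0) => x Sx; exists s0; split=> // i.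
  by rewrite (Hag s0 x) // J0 inE.
case: (classic (exists s0, S s0)) => [[s0 Hs0]|Hn]; last first.
  by exists 0%N => x Sx; case: Hn; exists x.
pose P i c M := i \in J -> forall x, S x /\ f x i = c ->
   exists y, [/\ S y /\ f y i = c, (forall j, f y j <= f x j)%N & (g y <= M)%N].
have HP : forall i c, exists M, P i c M.
  move=> i c; case: (boolP (i \in J)) => iJ; last by exists 0%N => H; case: (negP iJ H).
  have H1 : (#|J :\ i| <= k)%N by move: HJ; rewrite (cardsD1 i J) iJ /=; lia.
  have H2 : forall x y, S x /\ f x i = c -> S y /\ f y i = c ->
      forall j, j \notin J :\ i -> f x j = f y j.
    move=> x y [Sx fx] [Sy fy] j; rewrite !inE negb_and negbK.
    case/orP => [/eqP -> | jJ]; first by rewrite fx fy.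
    exact: Hag.
  have [M HM] := IH (J :\ i) (fun x => S x /\ f x i = c) H1 H2.
  by exists M => _; apply: HM.
pose Mf i c := proj1_sig (constructive_indefinite_description _ (HP i c)).
have HMf i c : P i c (Mf i c) := proj2_sig (constructive_indefinite_description _ (HP i c)).
pose K := (\sum_i f s0 i).+1.
exists (maxn (g s0) (\max_(i : I) \max_(c < K) Mf i c)) => x Sx.
case: (boolP [forall i, f s0 i <= f x i]%N) => [/forallP H|].
  by exists s0; split=> //; rewrite leq_maxl.
rewrite negb_forall => /existsP [i]; rewrite -ltnNge => Hlt.
have iJ : i \in J.
  apply/negPn/negP => iJ; move: Hlt; rewrite (Hag x s0) // ltnn //.
have cK : (f x i < K)%N.
  apply: (leq_trans Hlt); apply: leqW; rewrite (bigD1 i) //=; exact: leq_addr.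
have [y [[Sy _] Hy Hg]] := HMf i (f x i) iJ x (conj Sx erefl).
exists y; split=> //.
apply: (leq_trans Hg); apply: (leq_trans _ (leq_maxr _ _)).
apply: (leq_trans _ (leq_bigmax i)).
exact: (leq_bigmax (Ordinal cK)).
Qed.

Local Open Scope ring_scope.


Lemma c_nn1 (a b t : int) : Num.max b 0 <= Num.max a 0 -> 0 <= Num.max b 0 + t -> 0 <= Num.max a 0 + t.
Proof. lia. Qed.
Lemma c_nn2 (a b t : int) : Num.max (- b) 0 <= Num.max (- a) 0 -> 0 <= Num.max (- b) 0 + t -> 0 <= Num.max (- a) 0 + t.
Proof. lia. Qed.
Lemma c_n1 (a b t : int) : Num.max b 0 <= Num.max a 0 -> Num.max (- b) 0 <= Num.max (- a) 0 ->
  `|Num.max a 0 + t - Num.max (- a) 0| + `|b| <= `|Num.max b 0 + t - Num.max (- b) 0| + `|a|.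
Proof. lia. Qed.
Lemma c_n2 (a b t : int) : Num.max b 0 <= Num.max a 0 -> Num.max (- b) 0 <= Num.max (- a) 0 ->
  `|Num.max a 0 - (Num.max (- a) 0 + t)| + `|b| <= `|Num.max b 0 - (Num.max (- b) 0 + t)| + `|a|.
Proof. lia. Qed.
Lemma c_b1 (a t : int) : `|t| <= `|Num.max a 0 + t - Num.max (- a) 0| + `|a|.
Proof. lia. Qed.
Lemma c_b2 (a t : int) : `|t| <= `|Num.max a 0 + - t - Num.max (- a) 0| + `|a|.
Proof. lia. Qed.
Lemma c_b3 (a t : int) : `|t| <= `|Num.max a 0 - (Num.max (- a) 0 + t)| + `|a|.
Proof. lia. Qed.
Lemma c_b4 (a t : int) : `|t| <= `|Num.max a 0 - (Num.max (- a) 0 + - t)| + `|a|.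
Proof. lia. Qed.

Section Main.
Variables (d n : nat) (A : 'M[int]_(d, n)).

Definition conf (y z : 'cV[int]_n) :=
  forall i, posp y i 0 <= posp z i 0 /\ negp y i 0 <= negp z i 0.

Lemma mono_plus (z y w : 'cV[int]_n) : conf y z -> reduces_plus y w -> reduces_plus z w.
Proof.
move=> Hc [eps [Hn Hl]]; exists eps; split.
  move=> i; have := Hn i; have [h1 h2] := Hc i; rewrite !mxE in h1 h2 *; exact: c_nn1.
have key : norm1 (posp z + sgnv eps w - negp z) + norm1 y <=
           norm1 (posp y + sgnv eps w - negp y) + norm1 z.
  rewrite /norm1 -!big_split /=; apply: ler_sum => i _.
  have [h1 h2] := Hc i; rewrite !mxE in h1 h2 *; exact: c_n1.
move: Hl key; lia.
Qed.

Lemma mono_minus (z y w : 'cV[int]_n) : conf y z -> reduces_minus y w -> reduces_minus z w.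
Proof.
move=> Hc [eps [Hn Hl]]; exists eps; split.
  move=> i; have := Hn i; have [h1 h2] := Hc i; rewrite !mxE in h1 h2 *; exact: c_nn2.
have key : norm1 (posp z - (negp z + sgnv eps w)) + norm1 y <=
           norm1 (posp y - (negp y + sgnv eps w)) + norm1 z.
  rewrite /norm1 -!big_split /=; apply: ler_sum => i _.
  have [h1 h2] := Hc i; rewrite !mxE in h1 h2 *; exact: c_n2.
move: Hl key; lia.
Qed.

Lemma bound_plus (y w : 'cV[int]_n) : reduces_plus y w -> norm1 w < norm1 y + norm1 y.
Proof.
move=> [eps [_ Hl]].
have key : norm1 w <= norm1 (posp y + sgnv eps w - negp y) + norm1 y.
  rewrite /norm1 -!big_split /=; apply: ler_sum => i _.
  by case: (eps); rewrite /sgnv /= !mxE; [exact: c_b1 | exact: c_b2].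
move: Hl key; lia.
Qed.

Lemma bound_minus (y w : 'cV[int]_n) : reduces_minus y w -> norm1 w < norm1 y + norm1 y.
Proof.
move=> [eps [_ Hl]].
have key : norm1 w <= norm1 (posp y - (negp y + sgnv eps w)) + norm1 y.
  rewrite /norm1 -!big_split /=; apply: ler_sum => i _.
  by case: (eps); rewrite /sgnv /= !mxE; [exact: c_b3 | exact: c_b4].
move: Hl key; lia.
Qed.

Lemma coord_le_norm (u : 'cV[int]_n) i : `|u i 0| <= norm1 u.
Proof.
rewrite /norm1 (bigD1 i) //= lerDl; apply: sumr_ge0 => j _; exact: normr_ge0.
Qed.

Lemma box_finite (N : nat) : exists s : seq 'cV[int]_n,
  forall u, norm1 u <= N%:Z -> u \in s.
Proof.
exists [seq \col_i ((nat_of_ord (g i))%:Z - N%:Z)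
        | g : {ffun 'I_n -> 'I_(N + N).+1} <- enum [set: {ffun 'I_n -> 'I_(N + N).+1}]].
move=> u Hu; apply/mapP.
exists [ffun i => inord (absz (u i 0 + N%:Z))]; first by rewrite mem_enum inE.
apply/matrixP => i j; rewrite ord1 mxE ffunE.
have := coord_le_norm u i => Hi.
move: (u i 0) (norm1 u) Hu Hi => a m Hu Hi; rewrite inordK; lia.
Qed.

End Main.

Lemma graver_bound (n : nat) (S : 'cV[int]_n -> Prop) :
  exists M : nat, forall z, S z -> exists y, [/\ S y, conf y z & norm1 y <= M%:Z].
Proof.
pose f (z : 'cV[int]_n) (p : ('I_n * bool)%type) : nat :=
  if p.2 then absz (posp z p.1 0) else absz (negp z p.1 0).
have Hag : forall x y, S x -> S y -> forall i, i \notin [set: ('I_n * bool)%type] -> f x i = f y i.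
  by move=> x y _ _ i; rewrite inE.
have [M HM] := @dickson_aux _ _ f (fun z => absz (norm1 z)) #|[set: ('I_n * bool)%type]|
   setT S (leqnn _) Hag.
exists M => z Sz; have [y [Sy Hf Hg]] := HM z Sz.
exists y; split => //.
  move=> i; have := Hf (i, true); have := Hf (i, false); rewrite /f /=.
  have : 0 <= posp y i 0 by rewrite mxE; move: (y i 0) => q; lia.
  have : 0 <= posp z i 0 by rewrite mxE; move: (z i 0) => q; lia.
  have : 0 <= negp y i 0 by rewrite mxE; move: (y i 0) => q; lia.
  have : 0 <= negp z i 0 by rewrite mxE; move: (z i 0) => q; lia.
  move: (posp y i 0) (posp z i 0) (negp y i 0) (negp z i 0) => a b c e.
  lia.
have : 0 <= norm1 y by apply: sumr_ge0 => i _; exact: normr_ge0.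
move: (norm1 y) Hg => a; lia.
Qed.

Theorem corollary8p17 (d n : nat) (A : 'M[int]_(d, n)) :
  (forall z : 'cV[int]_n, in_ker A z -> nonneg z -> z = 0) ->
  finite_set (univ_DR A) /\ finite_set (univ_SDR A).
Proof.
move=> _.
have [M HM] := graver_bound (fun z => in_ker A z /\ z <> 0).
have [s Hs] := box_finite n (M + M).
have Hb : forall u y : 'cV[int]_n, norm1 y <= M%:Z -> norm1 u < norm1 y + norm1 y -> u \in s.
  move=> u y h1 h2; move: (Hs u) => Hs'. apply: Hs'; move: (norm1 u) (norm1 y) h1 h2 => a b; lia.
split; exists s => u [B [[HBk HBr] Hmin] Bu].
- pose B' := fun w => B w /\ w <> u.
  have Hp : proper_subset B' B.
    by split; [move=> w [] | exists u; split=> // -[]].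
  have Hnd := Hmin B' Hp.
  have [z [Hz [z0 Hzr]]] : exists z, in_ker A z /\ z <> 0 /\
     ~ ((exists2 w, B' w & reduces_plus z w) \/ (exists2 w, B' w & reduces_minus z w)).
    apply: NNPP => Hc; apply: Hnd; split; first by move=> w [Bw _]; exact: HBk.
    move=> z Hz z0; apply: NNPP => Hn; apply: Hc; by exists z.
  have [y [[Hy y0] Hc Hny]] := HM z (conj Hz z0).
  case: (HBr y Hy y0) => [[w Bw Hw]|[w Bw Hw]].
    case: (eqVneq w u) => [wu|wu]; first by subst w; exact: (Hb u y Hny (bound_plus Hw)).
    by case: Hzr; left; exists w; [split=> //; apply/eqP | exact: mono_plus Hc Hw].
  case: (eqVneq w u) => [wu|wu]; first by subst w; exact: (Hb u y Hny (bound_minus Hw)).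
  by case: Hzr; right; exists w; [split=> //; apply/eqP | exact: mono_minus Hc Hw].
- pose B' := fun w => B w /\ w <> u.
  have Hp : proper_subset B' B.
    by split; [move=> w [] | exists u; split=> // -[]].
  have Hnd := Hmin B' Hp.
  have [z [Hz [z0 Hzr]]] : exists z, in_ker A z /\ z <> 0 /\
     ~ ((exists2 w, B' w & reduces_plus z w) /\ (exists2 w, B' w & reduces_minus z w)).
    apply: NNPP => Hc; apply: Hnd; split; first by move=> w [Bw _]; exact: HBk.
    move=> z Hz z0; apply: NNPP => Hn; apply: Hc; by exists z.
  have [y [[Hy y0] Hc Hny]] := HM z (conj Hz z0).
  have [[w Bw Hw] [w' Bw' Hw']] := HBr y Hy y0.
  case: (classic (exists2 w, B' w & reduces_plus z w)) => Hp1.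
    case: (eqVneq w' u) => [wu|wu]; first by subst w'; exact: (Hb u y Hny (bound_minus Hw')).
    by case: Hzr; split=> //; exists w'; [split=> //; apply/eqP | exact: mono_minus Hc Hw'].
  case: (eqVneq w u) => [wu|wu]; first by subst w; exact: (Hb u y Hny (bound_plus Hw)).
  by case: Hp1; exists w; [split=> //; apply/eqP | exact: mono_plus Hc Hw].
Qed.
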